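(* Along a $C^1$ curve $z(s)$ with tangent $v^\mu$ in a Lorentzian 4-manifold, let $p^\mu(s)$, antisymmetric $S^{\mu\nu}(s)$, a timelike unit vector $u^\mu(s)$ and a scalar $M(s)>0$ be differentiable, with $p^\mu=Mu^\mu$, $p_\nu S^{\mu\nu}=0$ and $u_\kappa v^\kappa=-1$. Define $F^\nu$ and $L^{\kappa\lambda}$ by $$F^\nu=\frac{\delta p^\nu}{\delta s}-\tfrac12 S^{\kappa\lambda}v^\mu R_{\kappa\lambda\mu}{}^{\nu},\qquad L^{\kappa\lambda}=\frac{\delta S^{\kappa\lambda}}{\delta s}-2p^{[\kappa}v^{\lambda]},$$ and assume $M^2+\tfrac14 S^{\kappa\lambda}S^{\tau\nu}R_{\kappa\lambda\tau\nu}\neq0$. Then $$Mv^\mu=p^\mu-u_\nu L^{\mu\nu}-\frac{S^{\mu\nu}\Big[MF_\nu-\tfrac12 S^{\kappa\lambda}\big(p^\tau-u_\sigma L^{\tau\sigma}\big)R_{\kappa\lambda\nu\tau}\Big]}{M^2+\tfrac14 S^{\kappa\lambda}S^{\tau\nu}R_{\kappa\lambda\tau\nu}} .$$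
   Context: $\delta/\delta s=v^\mu\nabla_\mu$; $R_{\kappa\lambda\mu\nu}$ is the Riemann tensor with the algebraic symmetries $R_{\kappa\lambda\mu\nu}=-R_{\lambda\kappa\mu\nu}=-R_{\kappa\lambda\nu\mu}=R_{\mu\nu\kappa\lambda}$ and $R_{\kappa[\lambda\mu\nu]}=0$; indices lowered with the metric; $A^{[\kappa}B^{\lambda]}=\tfrac12(A^\kappa B^\lambda-A^\lambda B^\kappa)$. *)

(* Defs.v *)
From Stdlib Require Import Reals.
Open Scope R_scope.

(* Spacetime indices are natural numbers 0..3; only indices < 4 matter. *)
Definition sum4 (f : nat -> R) : R := f 0%nat + f 1%nat + f 2%nat + f 3%nat.

Definition eta (a b : nat) : R :=
  if Nat.eqb a b then (if Nat.eqb a 0 then -1 else 1) else 0.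

Definition kdelta (a b : nat) : R := if Nat.eqb a b then 1 else 0.

(* A Lorentzian metric (signature -+++) at a point: symmetric components
   admitting an orthonormal frame. *)
Definition lorentzian (g : nat -> nat -> R) : Prop :=
  (forall m n, (m < 4)%nat -> (n < 4)%nat -> g m n = g n m) /\
  exists e : nat -> nat -> R,
    forall a b, (a < 4)%nat -> (b < 4)%nat ->
      sum4 (fun m => sum4 (fun n => g m n * e a m * e b n)) = eta a b.

Definition inverse_metric (g ginv : nat -> nat -> R) : Prop :=
  forall m n, (m < 4)%nat -> (n < 4)%nat ->
    sum4 (fun r => g m r * ginv r n) = kdelta m n.

Definition lower (g : nat -> nat -> R) (x : nat -> R) (n : nat) : R :=
  sum4 (fun r => g n r * x r).

(* Algebraic symmetries of the (all-lower-index) Riemann tensor. *)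
Definition riemann_symmetries (Rm : nat -> nat -> nat -> nat -> R) : Prop :=
  forall k l m n, (k < 4)%nat -> (l < 4)%nat -> (m < 4)%nat -> (n < 4)%nat ->
    Rm k l m n = - Rm l k m n /\
    Rm k l m n = - Rm k l n m /\
    Rm k l m n = Rm m n k l /\
    Rm k l m n + Rm k m n l + Rm k n l m = 0.

(* Covariant derivative along the curve (tangent v), in coordinates, with
   connection coefficients Gam n a b = Gamma^n_{ab}:
   delta x^n/ds = dx^n/ds + Gamma^n_{ab} v^a x^b. *)
Definition cov_vec (Gam : nat -> nat -> nat -> R) (v x dx : nat -> R)
    (n : nat) : R :=
  dx n + sum4 (fun a => sum4 (fun b => Gam n a b * v a * x b)).

Definition cov_bivec (Gam : nat -> nat -> nat -> R) (v : nat -> R)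
    (S dS : nat -> nat -> R) (k l : nat) : R :=
  dS k l
  + sum4 (fun a => sum4 (fun b => Gam k a b * v a * S b l))
  + sum4 (fun a => sum4 (fun b => Gam l a b * v a * S k b)).

Definition forceF (Gam : nat -> nat -> nat -> R) (ginv : nat -> nat -> R)
    (Rm : nat -> nat -> nat -> nat -> R) (v p dp : nat -> R)
    (S : nat -> nat -> R) (n : nat) : R :=
  cov_vec Gam v p dp n
  - / 2 * sum4 (fun k => sum4 (fun l => sum4 (fun m =>
        S k l * v m * sum4 (fun r => Rm k l m r * ginv r n)))).

Definition torqueL (Gam : nat -> nat -> nat -> R) (v p : nat -> R)
    (S dS : nat -> nat -> R) (k l : nat) : R :=
  cov_bivec Gam v S dS k l - (p k * v l - p l * v k).

(* Main.v *)
Require Import Defs.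
From Stdlib Require Import Reals Lia Lra.
Open Scope R_scope.
From mathcomp Require all_boot all_algebra Rstruct.

Module MX.
Import all_boot all_algebra Rstruct.
Import GRing.Theory.
Local Open Scope ring_scope.

Lemma inv_comm (g h : nat->nat->R) :
  (forall m n, (m<4)%coq_nat -> (n<4)%coq_nat -> sum4 (fun r => Rmult (g m r) (h r n)) = kdelta m n) ->
  forall m n, (m<4)%coq_nat -> (n<4)%coq_nat -> sum4 (fun r => Rmult (h m r) (g r n)) = kdelta m n.
Proof.
move=> H m n Hm Hn.
pose A : 'M[R]_4 := \matrix_(i < 4, j < 4) g (nat_of_ord i) (nat_of_ord j).
pose B : 'M[R]_4 := \matrix_(i < 4, j < 4) h (nat_of_ord i) (nat_of_ord j).
have E : forall (f1 f2 : nat -> nat -> R) (i j : 'I_4),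
   ((\matrix_(i < 4, j < 4) f1 (nat_of_ord i) (nat_of_ord j) : 'M[R]_4) *m
    (\matrix_(i < 4, j < 4) f2 (nat_of_ord i) (nat_of_ord j))) i j
   = sum4 (fun r => f1 i r * f2 r j).
  move=> f1 f2 i j; rewrite mxE !big_ord_recr big_ord0 /= !mxE /sum4.
  by rewrite add0r.
have AB : A *m B = 1%:M.
  apply/matrixP => i j; rewrite E H; last by apply/ltP.
  2: by apply/ltP.
  by rewrite !mxE /kdelta; case: (i =P j) => [->|ne]; [rewrite Nat.eqb_refl | 
     case: Nat.eqb_spec => // hij; case: ne; apply: val_inj].
have BA := mulmx1C AB.
have mlt : (m < 4)%N by apply/ltP.
have nlt : (n < 4)%N by apply/ltP.
have := congr1 (fun M : 'M[R]_4 => M (Ordinal mlt) (Ordinal nlt)) BA.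
rewrite /= E !mxE /kdelta /= => ->.
case: (Nat.eqb_spec m n) => [e|ne].
  have -> : Ordinal mlt = Ordinal nlt by apply: val_inj.
  by rewrite eqxx.
case: eqP => //= hh; case: ne; exact: (congr1 val hh).
Qed.
End MX.


Definition Dd (S : nat -> nat -> R) (i j : nat) : R :=
  match i, j return R with
  | 0%nat,1%nat => S 2%nat 3%nat | 0,2 => - S 1%nat 3%nat | 0,3 => S 1%nat 2%nat
  | 1,0 => - S 2%nat 3%nat | 2,0 => S 1%nat 3%nat | 3,0 => - S 1%nat 2%nat
  | 1,2 => S 0%nat 3%nat | 1,3 => - S 0%nat 2%nat | 2,3 => S 0%nat 1%nat
  | 2,1 => - S 0%nat 3%nat | 3,1 => S 0%nat 2%nat | 3,2 => - S 0%nat 1%nat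
  | _,_ => 0%R end.

Definition Pf (S : nat -> nat -> R) := S 0%nat 1%nat * S 2%nat 3%nat - S 0%nat 2%nat * S 1%nat 3%nat + S 0%nat 3%nat * S 1%nat 2%nat.

Definition antisym (S : nat -> nat -> R) := forall i j, (i < 4)%nat -> (j < 4)%nat -> S i j = - S j i.

Ltac anorm H :=
  let h := fresh in
  assert (h : forall i, (i < 4)%nat -> H i i = 0) by
    (let i := fresh in let Hi := fresh in intros i Hi;
     match goal with A : antisym H |- _ => pose proof (A i i Hi Hi) end; lra);
  match goal with A : antisym H |- _ =>
  rewrite ?(h 0%nat), ?(h 1%nat), ?(h 2%nat), ?(h 3%nat),
    ?(A 1 0)%nat, ?(A 2 0)%nat, ?(A 3 0)%nat, ?(A 2 1)%nat, ?(A 3 1)%nat, ?(A 3 2)%nat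
    by lia end; clear h.

Lemma pf_zero (S : nat -> nat -> R) (q : nat -> R) :
  antisym S ->
  (forall m, (m < 4)%nat -> sum4 (fun n => q n * S m n) = 0) ->
  (exists n, (n < 4)%nat /\ q n <> 0) -> Pf S = 0.
Proof.
  intros A H [n [Hn Hq]].
  pose proof (H 0%nat ltac:(lia)) as e0.
  pose proof (H 1%nat ltac:(lia)) as e1.
  pose proof (H 2%nat ltac:(lia)) as e2.
  pose proof (H 3%nat ltac:(lia)) as e3.
  unfold sum4 in e0, e1, e2, e3. unfold Pf.
  anorm S.
  revert e0 e1 e2 e3. anorm S. intros e0 e1 e2 e3.
  apply (Rmult_eq_reg_r (q n)); [|exact Hq]. rewrite Rmult_0_l.
  assert (n = 0 \/ n = 1 \/ n = 2 \/ n = 3)%nat as [ -> | [ -> | [ -> | -> ]]] by lia.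
  - match type of e1 with ?x1 = _ => match type of e2 with ?x2 = _ =>
    match type of e3 with ?x3 = _ =>
    transitivity ((- S 2%nat 3%nat) * x1 + S 1%nat 3%nat * x2 + (- S 1%nat 2%nat) * x3); [ring | rewrite e1, e2, e3; ring] end end end.
  - match type of e0 with ?x1 = _ => match type of e2 with ?x2 = _ =>
    match type of e3 with ?x3 = _ =>
    transitivity (S 2%nat 3%nat * x1 + (- S 0%nat 3%nat) * x2 + S 0%nat 2%nat * x3); [ring | rewrite e0, e2, e3; ring] end end end.
  - match type of e0 with ?x1 = _ => match type of e1 with ?x2 = _ =>
    match type of e3 with ?x3 = _ =>
    transitivity ((- S 1%nat 3%nat) * x1 + S 0%nat 3%nat * x2 + (- S 0%nat 1%nat) * x3); [ring | rewrite e0, e1, e3; ring] end end end.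
  - match type of e0 with ?x1 = _ => match type of e1 with ?x2 = _ =>
    match type of e2 with ?x3 = _ =>
    transitivity (S 1%nat 2%nat * x1 + (- S 0%nat 2%nat) * x2 + S 0%nat 1%nat * x3); [ring | rewrite e0, e1, e2; ring] end end end.
Qed.

Lemma sqs (S Q : nat -> nat -> R) : antisym S -> antisym Q -> Pf S = 0 ->
  forall m b, (m < 4)%nat -> (b < 4)%nat ->
  sum4 (fun n => sum4 (fun t => S m n * Q t n * S t b)) =
  / 2 * sum4 (fun t => sum4 (fun n => S t n * Q t n)) * S m b.
Proof.
  intros AS AQ HP m b Hm Hb.
  transitivity (/ 2 * sum4 (fun t => sum4 (fun n => S t n * Q t n)) * S m b - Pf S * Dd Q m b);
   [| rewrite HP; ring].
  unfold Pf.
  assert (m = 0 \/ m = 1 \/ m = 2 \/ m = 3)%nat as [ -> | [ -> | [ -> | -> ]]] by lia;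
  (assert (b = 0 \/ b = 1 \/ b = 2 \/ b = 3)%nat as [ -> | [ -> | [ -> | -> ]]] by lia);
  unfold sum4; cbn [Dd]; anorm S; anorm Q; field.
Qed.


Lemma sum4_ext f g : (forall n, (n < 4)%nat -> f n = g n) -> sum4 f = sum4 g.
Proof. intro H; unfold sum4; rewrite !H by lia; reflexivity. Qed.

Definition Zf G Gam v p dp n := lower G (cov_vec Gam v p dp) n.
Definition Yf G Gam (v u : nat -> R) S dS (m : nat) :=
  sum4 (fun n => lower G u n * cov_bivec Gam v S dS m n).
Definition Qf (Rm : nat -> nat -> nat -> nat -> R) (S : nat -> nat -> R) t n :=
  sum4 (fun k => sum4 (fun l => S k l * Rm k l t n)).
Definition Kf Rm S := sum4 (fun t => sum4 (fun n => S t n * Qf Rm S t n)).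

Lemma FA (G dG : nat -> nat -> R) (Gam : nat -> nat -> nat -> R) (v p dp u : nat -> R)
  (S dS : nat -> nat -> R) (Mm : R)
  (HdG : forall m n, (m < 4)%nat -> (n < 4)%nat -> dG m n = sum4 (fun a => sum4 (fun r =>
             v a * (Gam r a m * G r n + Gam r a n * G m r))))
  (Hpu : forall m, (m < 4)%nat -> p m = Mm * u m)
  (HpS : forall m, (m < 4)%nat -> sum4 (fun n => lower G p n * S m n) = 0)
  (Hder : forall m, (m < 4)%nat -> sum4 (fun n =>
      sum4 (fun r => dG n r * p r + G n r * dp r) * S m n + lower G p n * dS m n) = 0) :
  forall m, (m < 4)%nat ->
   Mm * Yf G Gam v u S dS m = - sum4 (fun n => S m n * Zf G Gam v p dp n).
Proof.
  intros m Hm.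
  assert (Hplu : forall n, lower G p n = Mm * lower G u n).
  { intro n. unfold lower. transitivity (sum4 (fun r => G n r * (Mm * u r))).
    apply sum4_ext; intros; rewrite Hpu by lia; reflexivity. unfold sum4; ring. }
  assert (Hd' : sum4 (fun n => sum4 (fun r => (sum4 (fun a => sum4 (fun c =>
      v a * (Gam c a n * G c r + Gam c a r * G n c)))) * p r + G n r * dp r) * S m n
      + lower G p n * dS m n) = 0).
  { rewrite <- (Hder m Hm). apply sum4_ext; intros n Hn.
    f_equal. f_equal. apply sum4_ext; intros r Hr. rewrite HdG by lia. reflexivity. }
  assert (H0 : sum4 (fun a => sum4 (fun b => Gam m a b * v a * sum4 (fun n => lower G p n * S b n))) = 0).
  { transitivity (sum4 (fun a => sum4 (fun b : nat => 0))).
    apply sum4_ext; intros a Ha; apply sum4_ext; intros b Hb. rewrite HpS by lia. ring.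
    unfold sum4; ring. }
  assert (E1 : Mm * Yf G Gam v u S dS m = sum4 (fun n => lower G p n * cov_bivec Gam v S dS m n)).
  { unfold Yf. transitivity (sum4 (fun n => Mm * (lower G u n * cov_bivec Gam v S dS m n))).
    unfold sum4; ring. apply sum4_ext; intros; rewrite Hplu; ring. }
  rewrite E1.
  revert Hd' H0. unfold Zf, cov_bivec, cov_vec, lower, sum4. intros Hd' H0.
  lra.
Qed.


Lemma FB (G Gi : nat -> nat -> R) (Gam : nat -> nat -> nat -> R) Rm (v p dp : nat -> R)
  (S : nat -> nat -> R)
  (HGs : forall m n, (m < 4)%nat -> (n < 4)%nat -> G m n = G n m)
  (HGi : inverse_metric G Gi) :
  forall n, (n < 4)%nat ->
  lower G (forceF Gam Gi Rm v p dp S) n =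
    Zf G Gam v p dp n - / 2 * sum4 (fun t => v t * Qf Rm S t n).
Proof.
  intros n Hn.
  assert (GiG : forall q, (q < 4)%nat -> sum4 (fun r => G n r * Gi q r) = kdelta q n).
  { intros q Hq. rewrite <- (MX.inv_comm G Gi HGi q n Hq Hn).
    apply sum4_ext; intros r Hr. rewrite (HGs n r) by lia. ring. }
  transitivity (Zf G Gam v p dp n - / 2 * sum4 (fun q =>
     sum4 (fun k => sum4 (fun l => sum4 (fun mm => S k l * v mm * Rm k l mm q)))
     * sum4 (fun r => G n r * Gi q r))).
  { unfold Zf, forceF, lower, sum4. ring. }
  f_equal. f_equal.
  transitivity (sum4 (fun q =>
     sum4 (fun k => sum4 (fun l => sum4 (fun mm => S k l * v mm * Rm k l mm q)))
     * kdelta q n)).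
  { apply sum4_ext; intros q Hq; rewrite GiG by lia; reflexivity. }
  unfold Qf.
  assert (n = 0 \/ n = 1 \/ n = 2 \/ n = 3)%nat as [ -> | [ -> | [ -> | -> ]]] by lia;
  unfold sum4, kdelta; simpl; ring.
Qed.

Lemma FE (G : nat -> nat -> R) (Gam : nat -> nat -> nat -> R) (v p u : nat -> R)
  (S dS : nat -> nat -> R) (Mm : R)
  (Hu : sum4 (fun m => lower G u m * u m) = -1)
  (Hpu : forall m, (m < 4)%nat -> p m = Mm * u m)
  (Huv : sum4 (fun k => lower G u k * v k) = -1) :
  forall t, p t - sum4 (fun sg => lower G u sg * torqueL Gam v p S dS t sg)
    = Mm * v t - Yf G Gam v u S dS t.
Proof.
  intros t.
  assert (Hup : sum4 (fun sg => lower G u sg * p sg) = - Mm).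
  { transitivity (Mm * sum4 (fun m => lower G u m * u m)); [|rewrite Hu; ring].
    transitivity (sum4 (fun m => Mm * (lower G u m * u m))); [|unfold sum4; ring].
    apply sum4_ext; intros; rewrite Hpu by lia; ring. }
  transitivity (p t - (Yf G Gam v u S dS t - p t * sum4 (fun k => lower G u k * v k)
        + v t * sum4 (fun sg => lower G u sg * p sg))).
  { f_equal. unfold Yf, torqueL. generalize (lower G u). intro w. unfold sum4; ring. }
  rewrite Hup, Huv. ring.
Qed.


Lemma core (G Gi dG : nat -> nat -> R) (Gam : nat -> nat -> nat -> R)
  (Rm : nat -> nat -> nat -> nat -> R) (v p dp u : nat -> R)
  (S dS : nat -> nat -> R) (Mm : R)
  (HGs : forall m n, (m < 4)%nat -> (n < 4)%nat -> G m n = G n m)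
  (HGi : inverse_metric G Gi)
  (HdG : forall m n, (m < 4)%nat -> (n < 4)%nat -> dG m n = sum4 (fun a => sum4 (fun r =>
             v a * (Gam r a m * G r n + Gam r a n * G m r))))
  (HRa : forall k l m n, (k < 4)%nat -> (l < 4)%nat -> (m < 4)%nat -> (n < 4)%nat ->
          Rm k l m n = - Rm k l n m)
  (HS : antisym S)
  (HM : 0 < Mm)
  (Hu : sum4 (fun m => lower G u m * u m) = -1)
  (Hpu : forall m, (m < 4)%nat -> p m = Mm * u m)
  (HpS : forall m, (m < 4)%nat -> sum4 (fun n => lower G p n * S m n) = 0)
  (Huv : sum4 (fun k => lower G u k * v k) = -1)
  (Hden : Mm ^ 2 + / 4 * sum4 (fun k => sum4 (fun l => sum4 (fun t => sum4 (fun n =>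
             S k l * S t n * Rm k l t n)))) <> 0)
  (Hder : forall m, (m < 4)%nat -> sum4 (fun n =>
      sum4 (fun r => dG n r * p r + G n r * dp r) * S m n + lower G p n * dS m n) = 0) :
  forall m, (m < 4)%nat ->
    let F := forceF Gam Gi Rm v p dp S in
    let L := torqueL Gam v p S dS in
    let ul := lower G u in
    let Fl := lower G F in
    Mm * v m =
      p m - sum4 (fun n => ul n * L m n)
      - sum4 (fun n => S m n *
            (Mm * Fl n
             - / 2 * sum4 (fun k => sum4 (fun l => S k l *
                 sum4 (fun t => (p t - sum4 (fun sg => ul sg * L t sg))
                                * Rm k l n t)))))
        / (Mm ^ 2 + / 4 * sum4 (fun k => sum4 (fun l => sum4 (fun t => sum4 (fun n =>
             S k l * S t n * Rm k l t n))))).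
Proof.
  intros m Hm. cbv zeta.
  set (Y := Yf G Gam v u S dS). set (Z := Zf G Gam v p dp).
  set (Q := Qf Rm S). set (K := Kf Rm S).
  assert (HFA : forall m, (m < 4)%nat -> Mm * Y m = - sum4 (fun n => S m n * Z n))
    by (apply FA with dG; assumption).
  assert (Hplu : forall n, lower G p n = Mm * lower G u n).
  { intro n. unfold lower. transitivity (sum4 (fun r => G n r * (Mm * u r))).
    apply sum4_ext; intros; rewrite Hpu by lia; reflexivity. unfold sum4; ring. }
  assert (Hex : exists n, (n < 4)%nat /\ lower G p n <> 0).
  { destruct (Req_dec (lower G u 0) 0) as [h0|h0];
    [|exists 0%nat; split; [lia|rewrite Hplu; intro hh; apply h0;
       destruct (Rmult_integral _ _ hh); lra]].
    destruct (Req_dec (lower G u 1) 0) as [h1|h1];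
    [|exists 1%nat; split; [lia|rewrite Hplu; intro hh; apply h1;
       destruct (Rmult_integral _ _ hh); lra]].
    destruct (Req_dec (lower G u 2) 0) as [h2|h2];
    [|exists 2%nat; split; [lia|rewrite Hplu; intro hh; apply h2;
       destruct (Rmult_integral _ _ hh); lra]].
    destruct (Req_dec (lower G u 3) 0) as [h3|h3];
    [|exists 3%nat; split; [lia|rewrite Hplu; intro hh; apply h3;
       destruct (Rmult_integral _ _ hh); lra]].
    exfalso. unfold sum4 in Hu. rewrite h0, h1, h2, h3 in Hu. lra. }
  assert (HPf : Pf S = 0) by (apply (pf_zero S (lower G p)); assumption).
  assert (AQ : antisym Q).
  { intros i j Hi Hj. unfold Q, Qf.
    transitivity (sum4 (fun k => sum4 (fun l => - (S k l * Rm k l j i)))).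
    apply sum4_ext; intros k Hk; apply sum4_ext; intros l Hl; rewrite HRa by lia; ring.
    unfold sum4; ring. }
  assert (HSQS := sqs S Q HS AQ HPf).
  assert (FYm : sum4 (fun n => sum4 (fun t => S m n * Q t n * Y t)) = / 2 * K * Y m).
  { apply (Rmult_eq_reg_l Mm); [|lra].
    transitivity (sum4 (fun n => sum4 (fun t => S m n * Q t n * (Mm * Y t)))); [unfold sum4; ring|].
    transitivity (sum4 (fun n => sum4 (fun t => S m n * Q t n * (- sum4 (fun b => S t b * Z b))))).
    { apply sum4_ext; intros n Hn; apply sum4_ext; intros t Ht; rewrite HFA by lia; reflexivity. }
    transitivity (- sum4 (fun b => sum4 (fun n => sum4 (fun t => S m n * Q t n * S t b)) * Z b));
      [unfold sum4; ring|].
    transitivity (- sum4 (fun b => (/ 2 * K * S m b) * Z b)).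
    { f_equal. apply sum4_ext; intros b Hb. rewrite HSQS by lia. reflexivity. }
    transitivity (/ 2 * K * (- sum4 (fun b => S m b * Z b))); [unfold sum4; ring|].
    rewrite <- HFA by lia. ring. }
  assert (Rswap : forall (W : nat -> R) n, (n < 4)%nat ->
     sum4 (fun k => sum4 (fun l => S k l * sum4 (fun t => W t * Rm k l n t)))
     = - sum4 (fun t => W t * Q t n)).
  { intros W n Hn.
    transitivity (sum4 (fun k => sum4 (fun l => S k l * sum4 (fun t => W t * - Rm k l t n)))).
    apply sum4_ext; intros k Hk; apply sum4_ext; intros l Hl; f_equal;
      apply sum4_ext; intros t Ht; rewrite HRa by lia; reflexivity.
    unfold Q, Qf, sum4; ring. }
  assert (Inner : forall W : nat -> R, (forall t, W t = Mm * v t - Y t) -> forall n, (n < 4)%nat ->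
     Mm * lower G (forceF Gam Gi Rm v p dp S) n
     - / 2 * sum4 (fun k => sum4 (fun l => S k l * sum4 (fun t => W t * Rm k l n t)))
     = Mm * Z n - / 2 * sum4 (fun t => Y t * Q t n)).
  { intros W HW n Hn. rewrite (FB G Gi Gam Rm v p dp S HGs HGi n Hn). rewrite Rswap by lia.
    transitivity (Mm * (Z n - / 2 * sum4 (fun t => v t * Q t n)) -
       / 2 * - sum4 (fun t => (Mm * v t - Y t) * Q t n)).
    { f_equal. f_equal. f_equal. apply sum4_ext; intros; rewrite HW; reflexivity. }
    unfold sum4; ring. }
  assert (HD : Mm ^ 2 + / 4 * sum4 (fun k => sum4 (fun l => sum4 (fun t => sum4 (fun n =>
             S k l * S t n * Rm k l t n)))) = Mm ^ 2 + / 4 * K).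
  { unfold K, Kf, Qf, sum4. ring. }
  rewrite HD in Hden |- *.
  assert (HN : sum4 (fun n => S m n *
            (Mm * lower G (forceF Gam Gi Rm v p dp S) n
             - / 2 * sum4 (fun k => sum4 (fun l => S k l *
                 sum4 (fun t => (p t - sum4 (fun sg => lower G u sg * torqueL Gam v p S dS t sg))
                                * Rm k l n t))))) = - (Mm ^ 2 + / 4 * K) * Y m).
  { transitivity (sum4 (fun n => S m n * (Mm * Z n - / 2 * sum4 (fun t => Y t * Q t n)))).
    { apply sum4_ext; intros n Hn. f_equal. apply Inner; [|lia].
      intro t. apply FE; assumption. }
    transitivity (Mm * sum4 (fun n => S m n * Z n)
       - / 2 * sum4 (fun n => sum4 (fun t => S m n * Q t n * Y t))); [unfold sum4; ring|].
    rewrite FYm.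
    assert (E : sum4 (fun n => S m n * Z n) = - (Mm * Y m)) by (rewrite HFA by lia; ring).
    rewrite E. field. }
  rewrite HN. rewrite (FE G Gam v p u S dS Mm Hu Hpu Huv m).
  fold Y. field. intro hh; apply Hden; lra.
Qed.


Lemma d_sum4 (f : nat -> R -> R) (df : nat -> R) s :
  (forall n, (n < 4)%nat -> derivable_pt_lim (f n) s (df n)) ->
  derivable_pt_lim (fun t => sum4 (fun n => f n t)) s (sum4 df).
Proof.
  intro H. unfold sum4.
  apply (derivable_pt_lim_plus (fun t => f 0%nat t + f 1%nat t + f 2%nat t) (f 3%nat));
    [|apply H; lia].
  apply (derivable_pt_lim_plus (fun t => f 0%nat t + f 1%nat t) (f 2%nat));
    [|apply H; lia].
  apply (derivable_pt_lim_plus (f 0%nat) (f 1%nat)); apply H; lia.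
Qed.

Lemma d_mult (f1 f2 : R -> R) l1 l2 s :
  derivable_pt_lim f1 s l1 -> derivable_pt_lim f2 s l2 ->
  derivable_pt_lim (fun t => f1 t * f2 t) s (l1 * f2 s + f1 s * l2).
Proof. intros; apply (derivable_pt_lim_mult f1 f2); assumption. Qed.

Lemma d_zero (f : R -> R) a0 b0 s :
  (forall t, a0 < t < b0 -> f t = 0) -> a0 < s < b0 -> derivable_pt_lim f s 0.
Proof.
  intros H Hs eps He.
  assert (Hd : 0 < Rmin (s - a0) (b0 - s)) by (apply Rmin_pos; lra).
  exists (mkposreal _ Hd). intros h Hh0 Hh. simpl in Hh.
  assert (h1 := Rmin_l (s - a0) (b0 - s)). assert (h2 := Rmin_r (s - a0) (b0 - s)).
  assert (a0 < s + h < b0).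
  { destruct (Rabs_def2 h _ Hh); lra. }
  rewrite !H by lra. replace ((0 - 0) / h - 0) with 0 by (field; exact Hh0). rewrite Rabs_R0.
  exact He.
Qed.

Theorem mainTheorem9
  (a0 b0 : R)
  (z v : R -> nat -> R)
  (g ginv dg : R -> nat -> nat -> R)
  (Gam : R -> nat -> nat -> nat -> R)
  (Riem : R -> nat -> nat -> nat -> nat -> R)
  (p dp u : R -> nat -> R)
  (S dS : R -> nat -> nat -> R)
  (M : R -> R)
  (Hz : forall s m, a0 < s < b0 -> (m < 4)%nat ->
          derivable_pt_lim (fun t => z t m) s (v s m))
  (Hvc : forall s m, a0 < s < b0 -> (m < 4)%nat ->
          continuity_pt (fun t => v t m) s)
  (Hg : forall s, a0 < s < b0 -> lorentzian (g s))
  (Hginv : forall s, a0 < s < b0 -> inverse_metric (g s) (ginv s))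
  (Hdg : forall s m n, a0 < s < b0 -> (m < 4)%nat -> (n < 4)%nat ->
          derivable_pt_lim (fun t => g t m n) s (dg s m n))
  (HGsym : forall s r a b, a0 < s < b0 -> (r < 4)%nat -> (a < 4)%nat -> (b < 4)%nat ->
          Gam s r a b = Gam s r b a)
  (HGcompat : forall s m n, a0 < s < b0 -> (m < 4)%nat -> (n < 4)%nat ->
          dg s m n = sum4 (fun a => sum4 (fun r =>
             v s a * (Gam s r a m * g s r n + Gam s r a n * g s m r))))
  (HR : forall s, a0 < s < b0 -> riemann_symmetries (Riem s))
  (Hdp : forall s m, a0 < s < b0 -> (m < 4)%nat ->
          derivable_pt_lim (fun t => p t m) s (dp s m))
  (HS : forall s m n, a0 < s < b0 -> (m < 4)%nat -> (n < 4)%nat ->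
          S s m n = - S s n m)
  (HdS : forall s m n, a0 < s < b0 -> (m < 4)%nat -> (n < 4)%nat ->
          derivable_pt_lim (fun t => S t m n) s (dS s m n))
  (Hdu : forall s m, a0 < s < b0 -> (m < 4)%nat ->
          exists l, derivable_pt_lim (fun t => u t m) s l)
  (HdM : forall s, a0 < s < b0 -> exists l, derivable_pt_lim M s l)
  (HM : forall s, a0 < s < b0 -> 0 < M s)
  (Hu : forall s, a0 < s < b0 -> sum4 (fun m => lower (g s) (u s) m * u s m) = -1)
  (Hpu : forall s m, a0 < s < b0 -> (m < 4)%nat -> p s m = M s * u s m)
  (HpS : forall s m, a0 < s < b0 -> (m < 4)%nat ->
          sum4 (fun n => lower (g s) (p s) n * S s m n) = 0)
  (Huv : forall s, a0 < s < b0 -> sum4 (fun k => lower (g s) (u s) k * v s k) = -1)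
  (Hden : forall s, a0 < s < b0 ->
          M s ^ 2 + / 4 * sum4 (fun k => sum4 (fun l => sum4 (fun t => sum4 (fun n =>
             S s k l * S s t n * Riem s k l t n)))) <> 0) :
  forall s m, a0 < s < b0 -> (m < 4)%nat ->
    let F := forceF (Gam s) (ginv s) (Riem s) (v s) (p s) (dp s) (S s) in
    let L := torqueL (Gam s) (v s) (p s) (S s) (dS s) in
    let ul := lower (g s) (u s) in
    let Fl := lower (g s) F in
    M s * v s m =
      p s m - sum4 (fun n => ul n * L m n)
      - sum4 (fun n => S s m n *
            (M s * Fl n
             - / 2 * sum4 (fun k => sum4 (fun l => S s k l *
                 sum4 (fun t => (p s t - sum4 (fun sg => ul sg * L t sg))
                                * Riem s k l n t)))))
        / (M s ^ 2 + / 4 * sum4 (fun k => sum4 (fun l => sum4 (fun t => sum4 (fun n =>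
             S s k l * S s t n * Riem s k l t n))))).
Proof.
  intros s m Hs Hm.
  apply (core (g s) (ginv s) (dg s) (Gam s) (Riem s) (v s) (p s) (dp s) (u s) (S s) (dS s) (M s)).
  - destruct (Hg s Hs) as [Hsym _]. exact Hsym.
  - exact (Hginv s Hs).
  - intros m0 n0 Hm0 Hn0. exact (HGcompat s m0 n0 Hs Hm0 Hn0).
  - intros k l m0 n0 Hk Hl Hm0 Hn0. exact (proj1 (proj2 (HR s Hs k l m0 n0 Hk Hl Hm0 Hn0))).
  - intros i j Hi Hj. exact (HS s i j Hs Hi Hj).
  - exact (HM s Hs).
  - exact (Hu s Hs).
  - intros m0 Hm0. exact (Hpu s m0 Hs Hm0).
  - intros m0 Hm0. exact (HpS s m0 Hs Hm0).
  - exact (Huv s Hs).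
  - exact (Hden s Hs).
  - intros m0 Hm0.
    apply (uniqueness_limite (fun t => sum4 (fun n => lower (g t) (p t) n * S t m0 n)) s).
    + apply (d_sum4 (fun n t => lower (g t) (p t) n * S t m0 n)). intros n Hn.
      apply (d_mult (fun t => lower (g t) (p t) n) (fun t => S t m0 n)).
      * unfold lower. apply (d_sum4 (fun r t => g t n r * p t r)). intros r Hr.
        apply (d_mult (fun t => g t n r) (fun t => p t r)).
        -- apply Hdg; assumption.
        -- apply Hdp; assumption.
      * apply HdS; assumption.
    + apply (d_zero _ a0 b0); [|exact Hs].
      intros t Ht. exact (HpS t m0 Ht Hm0).
  - exact Hm.
Qed.
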